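(* Assume (A7). Then for the iterates of D-MSSCA, for all $T>1$ and $\alpha\in(0,1)$, $$\sum_{t=1}^T\mathbb{E}[(\theta^t)^2]\le\frac{4\alpha^2\lambda_W^2}{(1-\lambda_W^2)^2}\sum_{t=1}^{T-1}\mathbb{E}\|\delta^t\|^2 .$$
   Context: Problem. Let $n,d\ge 1$. For $i\in\{1,\dots,n\}$ and each value of a random variable $\xi$, $f_i(\cdot,\xi):\mathbb{R}^d\to\mathbb{R}$ is differentiable (possibly non-convex); $u_i(x):=\mathbb{E}[f_i(x,\xi_i)]$ and $u(x):=\frac1n\sum_{i=1}^n u_i(x)$. The function $h:\mathbb{R}^d\to\mathbb{R}$ is convex (possibly non-smooth), $g:\mathbb{R}^d\to\mathbb{R}$ is convex, $\mathcal{X}:=\{x\in\mathbb{R}^d: g(x)\le 0\}$, and $\mathbb{1}_{\mathcal X}$ is its indicator function ($0$ on $\mathcal X$, $+\infty$ outside). Let $U:=u+h$ and $U^\star:=\min_{x\in\mathcal X}U(x)$. The $n$ agents communicate over a graph with vertex set $\{1,\dots,n\}$ and edge set $\mathcal E$ through a matrix $W\in\mathbb{R}^{n\times n}$; $\lambda_W:=\lambda_{\max}(W-\frac1n\mathbf 1_n\mathbf 1_n^\top)$. Algorithm D-MSSCA. Parameters: $\alpha,\beta\in(0,1)$, $\mu>0$, an initial batch size $b_0\in\mathbb N$. For each $i$, each $x'\in\mathbb{R}^d$ and each sample $\xi$, a surrogate $\hat f_i(\cdot,x',\xi):\mathbb{R}^d\to\mathbb{R}$ is used that is $\mu$-strongly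 convex and satisfies $\nabla_x\hat f_i(x',x',\xi)=\nabla f_i(x',\xi)$. Node $i$ draws samples $\xi_i^{1,1},\dots,\xi_i^{1,b_0}$ (with $\xi_i^1:=\xi_i^{1,1}$) and then $\xi_i^{t}$ for $t\ge2$. Initialization: $x_i^1=\bar x^1$ for all $i$, for a common point $\bar x^1\in\mathcal X$; $z_i^1=y_i^1=\frac1{b_0}\sum_{r=1}^{b_0}\nabla f_i(x_i^1,\xi_i^{1,r})$; $z_i^0:=0$ and $\nabla f_i(x_i^0,\xi_i^1):=0$. For $t\ge1$, each node $i$ computes $\tilde f_i(x):=\hat f_i(x,x_i^t,\xi_i^t)+(1-\beta)\langle z_i^{t-1}-\nabla f_i(x_i^{t-1},\xi_i^t),x-x_i^t\rangle$, $\hat x_i^t:=\arg\min_{x\in\mathcal X}\ \tilde f_i(x)+\langle y_i^t-z_i^t,x-x_i^t\rangle+h(x)$, $x_i^{t+1}:=\sum_{j=1}^nW_{ij}\big(x_j^t+\alpha(\hat x_j^t-x_j^t)\big)$, $z_i^{t+1}:=\nabla f_i(x_i^{t+1},\xi_i^{t+1})+(1-\beta)\big(z_i^t-\nabla f_i(x_i^t,\xi_i^{t+1})\big)$, $y_i^{t+1}:=\sum_{j=1}^nW_{ij}\big(y_j^t+z_j^{t+1}-z_j^t\big)$. Notation. $x^t,y^t,z^t,\hat x^t\in\mathbb{R}^{nd}$ are the stacked vectors $[x_1^t;\dots;x_n^t]$ etc.; $\bar x^t=\frac1n\sum_ix_i^t$, and similarly $\bar y^t,\bar z^t$. $\nabla\mathbf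 u(x^t):=[\nabla u_1(x_1^t);\dots;\nabla u_n(x_n^t)]$ and $\overline{\nabla u}(x^t):=\frac1n\sum_i\nabla u_i(x_i^t)$. Define $\theta^t:=\|x^t-(\mathbf 1_n\otimes I_d)\bar x^t\|$, $\delta^t:=\hat x^t-x^t$, $\phi^t:=\mathbb{E}\|\bar z^t-\overline{\nabla u}(x^t)\|^2$, $\upsilon^t:=\mathbb{E}\|z^t-\nabla\mathbf u(x^t)\|^2$, $\varepsilon^t:=\mathbb{E}\|y^t-(\mathbf 1_n\otimes I_d)\bar y^t\|^2$. Norms are Euclidean. Assumptions. (A1) $\inf_{x}U(x)>-\infty$. (A2) With $\mathcal H^t$ the history generated by $\{\xi_i^\tau\}_{i\le n,\tau\le t-1}$, $\mathbb{E}[\nabla f_i(x^t,\xi_i^t)\mid\mathcal H^t]=\nabla u_i(x^t)$. (A3) $\mathbb{E}\|\nabla f_i(x,\xi_i^t)-\nabla u_i(x)\|^2\le\sigma_i^2$ for all $x$; $\bar\sigma^2:=\sum_i\sigma_i^2$. (A4) $\mathbb{E}\|\nabla f_i(x,\xi)-\nabla f_i(y,\xi)\|^2\le L^2\|x-y\|^2$ for all $x,y$. (A7) The graph is undirected and connected, $W$ is doubly stochastic, $W_{ii}>0$ for all $i$, and for $i\ne j$, $W_{ij}>0$ if $(i,j)\in\mathcal E$ and $W_{ij}=0$ otherwise. *)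

(* Defs.v *)
From HB Require Import structures.
From mathcomp Require Import all_boot all_order all_algebra.
From mathcomp Require Import all_classical all_reals all_analysis.
Set Implicit Arguments. Unset Strict Implicit. Unset Printing Implicit Defensive.
Import Order.TTheory GRing.Theory Num.Theory.
Import numFieldNormedType.Exports.
Local Open Scope classical_set_scope.
Local Open Scope ring_scope.

Section Defs.
Variable R : realType.

Definition dotv (d : nat) (u v : 'rV[R]_d) : R := \sum_(k < d) u 0 k * v 0 k.
Definition enorm (d : nat) (u : 'rV[R]_d) : R := Num.sqrt (dotv u u).

Definition cnorm (n : nat) (v : 'cV[R]_n) : R := Num.sqrt (\sum_(i < n) v i 0 ^+ 2).

(* Euclidean norm of a stacked vector [v_1; ...; v_n] in R^{nd} *)
Definition snorm (n d : nat) (v : 'I_n -> 'rV[R]_d) : R :=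
  Num.sqrt (\sum_(i < n) enorm (v i) ^+ 2).

Definition avg (n d : nat) (v : 'I_n -> 'rV[R]_d) : 'rV[R]_d :=
  n%:R^-1 *: \sum_(i < n) v i.

(* consensus error  theta = || v - 1_n (x) vbar || *)
Definition cons_err (n d : nat) (v : 'I_n -> 'rV[R]_d) : R :=
  snorm (fun i => v i - avg v).

Definition spec_norm (n : nat) (M : 'M[R]_n) : R :=
  sup [set cnorm (M *m v) | v in [set v : 'cV[R]_n | cnorm v <= 1]].

(* lambda_W := || W - (1/n) 1 1^T ||_2 *)
Definition lambdaW (n : nat) (W : 'M[R]_n) : R :=
  spec_norm (W - \matrix_(i, j) n%:R^-1).

Definition convex_fun (d : nat) (f : 'rV[R]_d -> R) : Prop :=
  forall x y (l : R), 0 <= l <= 1 ->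
    f (l *: x + (1 - l) *: y) <= l * f x + (1 - l) * f y.

Definition strongly_convex (d : nat) (mu : R) (f : 'rV[R]_d -> R) : Prop :=
  forall x y (l : R), 0 <= l <= 1 ->
    f (l *: x + (1 - l) *: y)
      <= l * f x + (1 - l) * f y - mu / 2 * l * (1 - l) * enorm (x - y) ^+ 2.

Definition has_gradient (d : nat) (f : 'rV[R]_d -> R) (x gr : 'rV[R]_d) : Prop :=
  differentiable f x /\ forall v : 'rV[R]_d, 'D_v f x = dotv gr v.

Definition assumption_A7 (n : nat) (E : rel 'I_n) (W : 'M[R]_n) : Prop :=
  (forall i j, E i j = E j i) /\
  (forall i j, connect E i j) /\
  (forall i j, 0 <= W i j) /\
  (forall i, \sum_(j < n) W i j = 1) /\
  (forall j, \sum_(i < n) W i j = 1) /\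
  (forall i, 0 < W i i) /\
  (forall i j, i != j -> (E i j -> 0 < W i j) /\ (~~ E i j -> W i j = 0)).


(* The iterates (x, xhat, y, z), indexed by t >= 1 and by the outcome w, of
   D-MSSCA run with samples xi i t w (t >= 1; xi i 1 = first sample of the
   initial batch) and initial batch batch i r w (r < b0). *)
Definition DMSSCA_iterates (n d : nat) (Omega : Type) (Xi : Type)
  (W : 'M[R]_n) (alpha beta : R) (b0 : nat)
  (gradf : 'I_n -> 'rV[R]_d -> Xi -> 'rV[R]_d)
  (fhat : 'I_n -> 'rV[R]_d -> 'rV[R]_d -> Xi -> R)
  (h g : 'rV[R]_d -> R)
  (xi batch : 'I_n -> nat -> Omega -> Xi) (x1 : 'rV[R]_d)
  (x xhat y z : nat -> Omega -> 'I_n -> 'rV[R]_d) : Prop :=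
  (forall w i, x 1%N w i = x1) /\
  (forall w i, z 1%N w i = b0%:R^-1 *: \sum_(r < b0) gradf i x1 (batch i r w)) /\
  (forall w i, y 1%N w i = z 1%N w i) /\
  (* local strongly convex subproblem (z^0 := 0, grad f_i(x^0, xi^1) := 0) *)
  (forall t w i, (1 <= t)%N ->
     let corr := if t == 1%N then 0
                 else z t.-1 w i - gradf i (x t.-1 w i) (xi i t w) in
     let F := fun v : 'rV[R]_d =>
         fhat i v (x t w i) (xi i t w)
         + (1 - beta) * dotv corr (v - x t w i)
         + dotv (y t w i - z t w i) (v - x t w i) + h v in
     g (xhat t w i) <= 0 /\
     (forall v, g v <= 0 -> F (xhat t w i) <= F v)) /\
  (forall t w i, (1 <= t)%N ->
     x t.+1 w i = \sum_(j < n) W i j *: (x t w j + alpha *: (xhat t w j - x t w j))) /\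
  (forall t w i, (1 <= t)%N ->
     z t.+1 w i = gradf i (x t.+1 w i) (xi i t.+1 w)
                  + (1 - beta) *: (z t w i - gradf i (x t w i) (xi i t.+1 w))) /\
  (forall t w i, (1 <= t)%N ->
     y t.+1 w i = \sum_(j < n) W i j *: (y t w j + z t.+1 w j - z t w j)).

End Defs.

(* Main.v *)
Require Import Defs.
From HB Require Import structures.
From mathcomp Require Import all_boot all_order all_algebra.
From mathcomp Require Import all_classical all_reals all_analysis.
From mathcomp Require Import ring lra.
From mathcomp Require Import measurable_realfun lebesgue_integral.
Import Order.TTheory GRing.Theory Num.Theory.
Import numFieldNormedType.Exports.
Local Open Scope classical_set_scope.
Local Open Scope ring_scope.
Section Contr.
Variable R : realType.
Variable n : nat.

Lemma row_id (w u : 'I_n -> R) : \sum_j w j = 1 ->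
  (\sum_j w j * u j) ^+ 2 =
  \sum_j w j * u j ^+ 2 - 2^-1 * \sum_j \sum_k w j * w k * (u j - u k) ^+ 2.
Proof.
move=> hw.
have inner : forall j, \sum_k w j * w k * (u j - u k) ^+ 2 =
  (w j * u j ^+ 2) - 2 * (w j * u j) * (\sum_k w k * u k) + w j * (\sum_k w k * u k ^+ 2).
  move=> j.
  have -> : w j * u j ^+ 2 = (w j * u j ^+ 2) * \sum_k w k by rewrite hw mulr1.
  rewrite !mulr_sumr -sumrB -big_split /=; apply: eq_bigr => k _; ring.
rewrite (eq_bigr _ (fun j _ => inner j)).
rewrite big_split sumrB /= -!mulr_suml hw.
rewrite -mulr_sumr.
set A := \sum_i w i * u i ^+ 2. set B := \sum_k w k * u k.
idtac.
rewrite mul1r; field; by [].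
Qed.

Lemma le_sum1 (I : finType) (F : I -> R) (a : I) :
  (forall i, 0 <= F i) -> F a <= \sum_i F i.
Proof. by move=> h; rewrite (bigD1 a) //= lerDl sumr_ge0. Qed.

Lemma nn3 (a b c : R) : 0 <= a -> 0 <= b -> 0 <= a * b * c ^+ 2.
Proof. by move=> ha hb; rewrite mulr_ge0 ?sqr_ge0 // mulr_ge0. Qed.

Lemma path_bound (E : rel 'I_n) (u : 'I_n -> R) (s : R) :
  (forall a b, E a b -> `|u a - u b| <= s) ->
  forall p a, path E a p -> `|u a - u (last a p)| <= (size p)%:R * s.
Proof.
move=> hs; elim=> [|b p IH] a /=.
  by rewrite subrr normr0 mul0r.
move=> /andP[hab hp].
have h1 := hs _ _ hab. have h2 := IH _ hp.
rewrite -addn1 natrD mulrDl mul1r.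
have -> : u a - u (last b p) = (u a - u b) + (u b - u (last b p)) by ring.
apply: (le_trans (ler_normD _ _)); lra.
Qed.

Variables (E : rel 'I_n) (W : 'M[R]_n).
Hypothesis hA7 : assumption_A7 E W.
Hypothesis hn : (1 <= n)%N.

Lemma contr_u : exists K : R, 1 <= K /\ forall u : 'I_n -> R, \sum_i u i = 0 ->
  \sum_i u i ^+ 2 <= K * \sum_j \sum_k W j j * W j k * (u j - u k) ^+ 2.
Proof.
case: hA7 => hsym [hconn [hW0 [hrow [hcol [hdiag hE]]]]].
have hex : forall p : 'I_n * 'I_n, exists s : seq 'I_n, path E p.1 s /\ p.2 = last p.1 s.
  by case=> i j; have /connectP[s h1 h2] := hconn i j; exists s.
have [pth hpth] := choice hex.
pose N := (\max_(p : 'I_n * 'I_n) size (pth p))%N.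
pose C : R := \sum_(p : 'I_n * 'I_n | E p.1 p.2 && (p.1 != p.2))
                 (W p.1 p.1 * W p.1 p.2)^-1 + 1.
have C0 : 0 <= C.
  rewrite /C; apply: addr_ge0 => //; apply: sumr_ge0 => p /andP[he hne].
  by rewrite invr_ge0 mulr_ge0 ?hW0.
exists ((n%:R * N%:R ^+ 2) * C + 1); split.
  by rewrite lerDr mulr_ge0 // mulr_ge0.
move=> u hu.
set Q := \sum_j \sum_k _.
have Q0 : 0 <= Q.
  by apply: sumr_ge0 => j _; apply: sumr_ge0 => k _; exact: nn3 _ _ _ (hW0 _ _) (hW0 _ _).
have edge : forall a b, E a b -> (u a - u b) ^+ 2 <= C * Q.
  move=> a b hab; case: (eqVneq a b) => [->|hne].
    by rewrite subrr expr0n /= mulr_ge0.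
  have hp : 0 < W a a * W a b by rewrite mulr_gt0 // ; case: (hE a b hne) => h _; exact: h.
  have t1 : W a a * W a b * (u a - u b) ^+ 2 <= Q.
    have h1 := le_sum1 _ (fun j => \sum_k W j j * W j k * (u j - u k) ^+ 2) a
      (fun j => sumr_ge0 _ (fun k _ => nn3 _ _ (u j - u k) (hW0 j j) (hW0 j k))).
    have h2 := le_sum1 _ (fun k => W a a * W a k * (u a - u k) ^+ 2) b
      (fun k => nn3 _ _ (u a - u k) (hW0 a a) (hW0 a k)).
    exact: le_trans h2 h1.
  have t2 : (W a a * W a b)^-1 <= C.
    rewrite /C (bigD1 (a, b)) /=; last by rewrite hab hne.
    rewrite -addrA lerDl; apply: addr_ge0 => //; apply: sumr_ge0 => p /andP[/andP[he hne'] _].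
    by rewrite invr_ge0 mulr_ge0 ?hW0.
  have -> : (u a - u b) ^+ 2 = (W a a * W a b)^-1 * (W a a * W a b * (u a - u b) ^+ 2).
    by rewrite mulrA mulVf ?mul1r // gt_eqF.
  apply: ler_pM => //; first by rewrite invr_ge0 ltW.
  by apply: mulr_ge0; [rewrite !mulr_ge0 | rewrite sqr_ge0].
pose s := Num.sqrt (C * Q).
have s0 : 0 <= s by apply: sqrtr_ge0.
have edge' : forall a b, E a b -> `|u a - u b| <= s.
  by move=> a b hab; rewrite -sqrtr_sqr; apply: ler_wsqrtr; apply: edge.
have pair : forall i j, `|u i - u j| <= N%:R * s.
  move=> i j; have [hp hl] := hpth (i, j).
  rewrite /= in hp hl; rewrite [in u j]hl.
  apply: le_trans (path_bound _ _ _ edge' _ _ hp) _.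
  apply: ler_wpM2r => //; rewrite ler_nat.
  rewrite /N; exact: (leq_bigmax (i, j)).
have n0 : (n%:R : R) != 0 by rewrite pnatr_eq0 -lt0n.
have single : forall i, u i ^+ 2 <= N%:R ^+ 2 * (C * Q).
  move=> i.
  have ui : u i = n%:R^-1 * \sum_j (u i - u j).
    by rewrite sumrB hu subr0 sumr_const card_ord -[u i *+ n]mulr_natr mulrCA mulVf ?mulr1.
  have hb : `|u i| <= N%:R * s.
    rewrite ui normrM ger0_norm ?invr_ge0 //.
    apply: le_trans (ler_wpM2l _ (ler_norm_sum _ _ _)) _; first by rewrite invr_ge0.
    apply: le_trans (ler_wpM2l _ (ler_sum _ (fun j _ => pair i j))) _; first by rewrite invr_ge0.
    by rewrite sumr_const card_ord -[N%:R * s *+ n]mulr_natr mulrCA mulVf ?mulr1.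
  rewrite -real_normK ?num_real //.
  have -> : N%:R ^+ 2 * (C * Q) = (N%:R * s) ^+ 2 by rewrite exprMn sqr_sqrtr // mulr_ge0.
  by apply: lerXn2r => //; rewrite nnegrE // mulr_ge0.
apply: le_trans (ler_sum _ (fun i _ => single i)) _.
rewrite sumr_const card_ord -[X in X <= _]mulr_natl.
clear -Q0; move: Q0; move: (N%:R ^+ 2 : R) C Q => a c q hq; by rewrite mulrDl mul1r !mulrA lerDl.
Qed.

Lemma contr_W : exists rho : R, 0 <= rho < 1 /\ forall v : 'I_n -> R,
  \sum_i (\sum_j (W i j - n%:R^-1) * v j) ^+ 2 <= rho * \sum_i v i ^+ 2.
Proof.
have [K [K1 HK]] := contr_u.
have hA := hA7; case: hA => hsym [hconn [hW0 [hrow [hcol [hdiag hE]]]]].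
have K0 : 0 < K by apply: lt_le_trans K1.
have n0 : (n%:R : R) != 0 by rewrite pnatr_eq0 -lt0n.
exists (1 - (2 * K)^-1); split.
  apply/andP; split.
    rewrite subr_ge0 invf_le1 ?mulr_gt0 //; lra.
  by rewrite ltrBlDr ltrDl invr_gt0 mulr_gt0.
move=> v.
pose m := n%:R^-1 * \sum_j v j.
pose u := fun j => v j - m.
have hu : \sum_j u j = 0.
  rewrite /u sumrB sumr_const card_ord /m -[_ *+ n]mulr_natl mulrA mulfV // mul1r.
  by rewrite subrr.
have e1 : forall i, \sum_j (W i j - n%:R^-1) * v j = \sum_j W i j * u j.
  move=> i; rewrite /u.
  under eq_bigr => j _ do rewrite mulrBl.
  under [RHS]eq_bigr => j _ do rewrite mulrBr.
  by rewrite !sumrB -mulr_sumr -mulr_suml hrow mul1r.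
have e2 : \sum_j u j ^+ 2 <= \sum_j v j ^+ 2.
  rewrite -subr_ge0 -sumrB.
  have -> : \sum_j (v j ^+ 2 - u j ^+ 2) = \sum_j (2 * m * v j - m ^+ 2).
    by apply: eq_bigr => j _; rewrite /u; ring.
  rewrite sumrB -mulr_sumr sumr_const card_ord.
  have -> : \sum_j v j = n%:R * m by rewrite /m mulrA mulfV // mul1r.
  rewrite -mulr_natl.
  have hn' : 0 <= (n%:R : R) by [].
  have : 0 <= n%:R * m ^+ 2 by rewrite mulr_ge0 // sqr_ge0.
  lra.
pose Q := \sum_j \sum_k W j j * W j k * (u j - u k) ^+ 2.
have hQ := HK u hu.
have e3 : \sum_i (\sum_j W i j * u j) ^+ 2 <= \sum_j u j ^+ 2 - 2^-1 * Q.
  rewrite (eq_bigr _ (fun i _ => row_id (W i) u (hrow i))).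
  rewrite sumrB exchange_big /=.
  have -> : \sum_j \sum_i W i j * u j ^+ 2 = \sum_j u j ^+ 2.
    by apply: eq_bigr => j _; rewrite -mulr_suml hcol mul1r.
  rewrite lerD2l lerN2 -mulr_sumr ler_wpM2l //.
  apply: ler_sum => i _.
  exact: (le_sum1 _ (fun j => \sum_k W i j * W i k * (u j - u k) ^+ 2) i
      (fun j => sumr_ge0 _ (fun k _ => nn3 _ _ (u j - u k) (hW0 i j) (hW0 i k)))).
rewrite (eq_bigr _ (fun i _ => congr1 (fun x => x ^+ 2) (e1 i))).
apply: le_trans e3 _.
have Q0 : 0 <= Q by apply: sumr_ge0 => j _; apply: sumr_ge0 => k _; exact: nn3 _ _ _ (hW0 _ _) (hW0 _ _).
have h1 : \sum_j u j ^+ 2 - 2^-1 * Q <= (1 - (2 * K)^-1) * \sum_j u j ^+ 2.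
  rewrite mulrBl mul1r lerD2l lerN2 invfM mulrAC -mulrA ler_wpM2l ?invr_ge0 //.
  by rewrite ler_pdivrMr // mulrC.
apply: le_trans h1 _; apply: ler_wpM2l => //.
rewrite subr_ge0 invf_le1 ?mulr_gt0 //; lra.
Qed.

Let M := W - \matrix_(i, j) (n%:R^-1 : R).

Lemma cnorm_ge0 (x : 'cV[R]_n) : 0 <= cnorm x.
Proof. exact: sqrtr_ge0. Qed.

Lemma cnorm_sq (x : 'cV[R]_n) : cnorm x ^+ 2 = \sum_i x i 0 ^+ 2.
Proof. by rewrite /cnorm sqr_sqrtr // sumr_ge0 // => i _; rewrite sqr_ge0. Qed.

Lemma Mx_entry (x : 'cV[R]_n) i : (M *m x) i 0 = \sum_j (W i j - n%:R^-1) * x j 0.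
Proof. by rewrite mxE; apply: eq_bigr => j _; rewrite !mxE. Qed.

Lemma cnormZ (a : R) (x : 'cV[R]_n) : cnorm (a *: x) = `|a| * cnorm x.
Proof.
rewrite /cnorm -sqrtr_sqr -sqrtrM ?sqr_ge0 //; congr Num.sqrt.
by rewrite mulr_sumr; apply: eq_bigr => i _; rewrite mxE exprMn.
Qed.

Lemma lam_facts : 0 <= lambdaW W < 1 /\
  forall x : 'cV[R]_n, cnorm (M *m x) <= lambdaW W * cnorm x.
Proof.
have [rho [/andP[r0 r1] hc]] := contr_W.
have key : forall x : 'cV[R]_n, cnorm (M *m x) <= Num.sqrt rho * cnorm x.
  move=> x; rewrite /cnorm -sqrtrM //; apply: ler_wsqrtr.
  under eq_bigr => i _ do rewrite Mx_entry.
  exact: hc (fun j => x j 0).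
pose S := [set cnorm (M *m v) | v in [set v : 'cV[R]_n | cnorm v <= 1]].
have ne : S !=set0.
  exists (cnorm (M *m 0)); exists 0 => //=.
  by rewrite /cnorm big1 ?sqrtr0 // => i _; rewrite mxE expr0n.
have ub : ubound S (Num.sqrt rho).
  move=> y [v /= hv <-]; apply: le_trans (key v) _.
  by rewrite -[X in _ <= X]mulr1 ler_wpM2l ?sqrtr_ge0.
have hs : has_sup S by split => //; exists (Num.sqrt rho).
have lamE : lambdaW W = sup S by [].
have l0 : 0 <= lambdaW W.
  case: ne => y Sy; rewrite lamE; apply: le_trans (sup_upper_bound hs Sy).
  by case: Sy => v _ <-; exact: cnorm_ge0.
split.
  rewrite l0 /=; apply: le_lt_trans (ge_sup ne ub) _.
  by rewrite -sqrtr1 ltr_sqrt.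
move=> x; have [c0|cpos] := eqVneq (cnorm x) 0.
  have := key x; rewrite c0 mulr0 => h.
  by rewrite mulr0; apply: le_trans h _.
have cg : 0 < cnorm x by rewrite lt_def cpos cnorm_ge0.
pose w := (cnorm x)^-1 *: x.
have hw : cnorm w <= 1.
  by rewrite /w cnormZ ger0_norm ?invr_ge0 ?cnorm_ge0 // mulVf.
have Sw : S (cnorm (M *m w)) by exists w.
have := sup_upper_bound hs Sw; rewrite -lamE /w -scalemxAr cnormZ.
rewrite ger0_norm ?invr_ge0 ?cnorm_ge0 // mulrC ler_pdivrMr //.
Qed.

Lemma lam_bound (v : 'I_n -> R) :
  \sum_i (\sum_j (W i j - n%:R^-1) * v j) ^+ 2 <= lambdaW W ^+ 2 * \sum_i v i ^+ 2.
Proof.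
have [/andP[l0 l1] hb] := lam_facts.
pose x : 'cV[R]_n := \col_j v j.
have e1 : \sum_i (\sum_j (W i j - n%:R^-1) * v j) ^+ 2 = cnorm (M *m x) ^+ 2.
  rewrite cnorm_sq; apply: eq_bigr => i _; rewrite Mx_entry.
  by congr (_ ^+ 2); apply: eq_bigr => j _; rewrite mxE.
have e2 : \sum_i v i ^+ 2 = cnorm x ^+ 2.
  by rewrite cnorm_sq; apply: eq_bigr => i _; rewrite mxE.
rewrite e1 e2 -exprMn; apply: lerXn2r; rewrite ?nnegrE ?cnorm_ge0 ?mulr_ge0 ?cnorm_ge0 //.
Qed.

Lemma center_le (v : 'I_n -> R) :
  \sum_j (v j - n%:R^-1 * \sum_l v l) ^+ 2 <= \sum_j v j ^+ 2.
Proof.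
have n0 : (n%:R : R) != 0 by rewrite pnatr_eq0 -lt0n.
set m := n%:R^-1 * _.
rewrite -subr_ge0 -sumrB.
have -> : \sum_j (v j ^+ 2 - (v j - m) ^+ 2) = \sum_j (2 * m * v j - m ^+ 2).
  by apply: eq_bigr => j _; ring.
rewrite sumrB -mulr_sumr sumr_const card_ord.
have -> : \sum_j v j = n%:R * m by rewrite /m mulrA mulfV // mul1r.
rewrite -mulr_natl.
have hn' : 0 <= (n%:R : R) by [].
have : 0 <= n%:R * m ^+ 2 by rewrite mulr_ge0 // sqr_ge0.
lra.
Qed.

Lemma scal_ineq (L a c : R) : 0 <= L -> L < 1 ->
  L * (a + c) ^+ 2 <= (1 + L) / 2 * a ^+ 2 + L * (1 + L) / (1 - L) * c ^+ 2.
Proof.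
move=> L0 L1.
have hL : 1 - L != 0 by rewrite subr_eq0 gt_eqF.
rewrite -subr_ge0.
have -> : (1 + L) / 2 * a ^+ 2 + L * (1 + L) / (1 - L) * c ^+ 2 - L * (a + c) ^+ 2
   = ((1 - L) * a - 2 * L * c) ^+ 2 / (2 * (1 - L)).
  by field.
by rewrite divr_ge0 ?sqr_ge0 // mulr_ge0 // subr_ge0 ltW.
Qed.

Variable d : nat.
Definition th (X : 'I_n -> 'I_d -> R) :=
  \sum_i \sum_k (X i k - n%:R^-1 * \sum_j X j k) ^+ 2.
Definition dn (D : 'I_n -> 'I_d -> R) := \sum_i \sum_k D i k ^+ 2.

Lemma step (alpha : R) (X D : 'I_n -> 'I_d -> R) :
  th (fun i k => \sum_j W i j * (X j k + alpha * D j k)) <=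
  (1 + lambdaW W ^+ 2) / 2 * th X +
  lambdaW W ^+ 2 * (1 + lambdaW W ^+ 2) / (1 - lambdaW W ^+ 2) * alpha ^+ 2 * dn D.
Proof.
have hA := hA7; case: hA => hsym [hconn [hW0 [hrow [hcol [hdiag hE]]]]].
have [/andP[l0 l1] _] := lam_facts.
set L := lambdaW W ^+ 2.
have L0 : 0 <= L by rewrite sqr_ge0.
have L1 : L < 1 by rewrite /L -(expr1n _ 2%N) ltrXn2r // ?nnegrE ?l0.
have n0 : (n%:R : R) != 0 by rewrite pnatr_eq0 -lt0n.
set q := (1 + L) / 2. set c := L * (1 + L) / (1 - L).
have c0 : 0 <= c by apply: divr_ge0; [apply: mulr_ge0 => //; lra | lra].
have perk : forall k : 'I_d,
  \sum_i (\sum_j W i j * (X j k + alpha * D j k) -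
          n%:R^-1 * \sum_l \sum_j W l j * (X j k + alpha * D j k)) ^+ 2 <=
  q * \sum_i (X i k - n%:R^-1 * \sum_j X j k) ^+ 2 + c * alpha ^+ 2 * \sum_i D i k ^+ 2.
  move=> k.
  set V := fun j => X j k + alpha * D j k.
  have s1 : \sum_l \sum_j W l j * V j = \sum_j V j.
    by rewrite exchange_big /=; apply: eq_bigr => j _; rewrite -mulr_suml hcol mul1r.
  rewrite s1.
  set mV := n%:R^-1 * \sum_j V j.
  have s2 : forall i, \sum_j W i j * V j - mV = \sum_j (W i j - n%:R^-1) * (V j - mV).
    move=> i.
    have z : \sum_j (W i j - n%:R^-1) = 0.
      by rewrite sumrB hrow sumr_const card_ord -[_ *+ n]mulr_natr mulVf // subrr.
    have -> : \sum_j (W i j - n%:R^-1) * (V j - mV) =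
              \sum_j (W i j - n%:R^-1) * V j - (\sum_j (W i j - n%:R^-1)) * mV.
      by rewrite mulr_suml -sumrB; apply: eq_bigr => j _; ring.
    rewrite z mul0r subr0 /mV.
    under [RHS]eq_bigr => j _ do rewrite mulrBl.
    by rewrite sumrB -mulr_sumr.
  rewrite (eq_bigr _ (fun i _ => congr1 (fun x => x ^+ 2) (s2 i))).
  apply: le_trans (lam_bound (fun j => V j - mV)) _.
  fold L.
  set mX := n%:R^-1 * \sum_j X j k.
  set mD := n%:R^-1 * \sum_j D j k.
  have s4 : forall j, V j - mV = (X j k - mX) + alpha * (D j k - mD).
    move=> j; rewrite /mV /V /mX /mD big_split /= -mulr_sumr; ring.
  rewrite (eq_bigr _ (fun j _ => congr1 (fun x => x ^+ 2) (s4 j))).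
  rewrite [L * _]mulr_sumr.
  apply: le_trans (ler_sum _ (fun j _ => scal_ineq L (X j k - mX) (alpha * (D j k - mD)) L0 L1)) _.
  rewrite big_split /= -!mulr_sumr lerD2l.
  have -> : \sum_i (alpha * (D i k - mD)) ^+ 2 = alpha ^+ 2 * \sum_i (D i k - mD) ^+ 2.
    by rewrite mulr_sumr; apply: eq_bigr => i _; rewrite exprMn.
  rewrite -/c mulrA; apply: ler_wpM2l; first by rewrite mulr_ge0 ?sqr_ge0.
  exact: center_le (fun j => D j k).
rewrite /th /dn (exchange_big _ _ _ _ _ (fun i k => (_ : R) ^+ 2)) /=.
rewrite [in X in _ <= _ * X + _]exchange_big [in X in _ <= _ + X]exchange_big /=.
rewrite mulr_sumr mulr_sumr -big_split /=.
apply: ler_sum => k _.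
exact: perk.
Qed.
End Contr.
Lemma sum_recur (R : realType) (L alpha : R) (th de : nat -> R) (T : nat) :
  0 <= L -> L < 1 -> (forall t, 0 <= th t) -> (forall t, 0 <= de t) ->
  th 1%N = 0 ->
  (forall t, (1 <= t)%N -> th t.+1 <= (1 + L) / 2 * th t + L * (1 + L) / (1 - L) * alpha ^+ 2 * de t) ->
  (1 < T)%N ->
  \sum_(1 <= t < T.+1) th t <= (4 * alpha ^+ 2 * L) / (1 - L) ^+ 2 * \sum_(1 <= t < T) de t.
Proof.
move=> L0 L1 th0 de0 th1 hrec hT.
set S := \sum_(1 <= t < T.+1) th t.
set A := \sum_(1 <= t < T) th t.
set Dl := \sum_(1 <= t < T) de t.
have D0 : 0 <= Dl by apply: sumr_ge0 => t _.
have hT1 : (1 <= T)%N by apply: ltnW.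
have SA : A <= S.
  by rewrite /S big_nat_recr //= lerDl.
have S1 : S = \sum_(1 <= t < T) th t.+1 by rewrite /S big_nat_recl // th1 add0r.
have h : S <= (1 + L) / 2 * A + L * (1 + L) / (1 - L) * alpha ^+ 2 * Dl.
  have h' : \sum_(1 <= t < T) th t.+1 <= \sum_(1 <= t < T) ((1 + L) / 2 * th t + L * (1 + L) / (1 - L) * alpha ^+ 2 * de t).
    by apply: ler_sum_nat => t /andP[ht _]; exact: hrec.
  rewrite S1; apply: le_trans h' _.
  by rewrite big_split /= -!mulr_sumr.
have u0 : 0 < 1 - L by rewrite subr_gt0.
have q0 : 0 <= (1 + L) / 2 by apply: divr_ge0 => //; lra.
have h2 : S <= (1 + L) / 2 * S + L * (1 + L) / (1 - L) * alpha ^+ 2 * Dl.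
  apply: le_trans h _; rewrite lerD2r; exact: ler_wpM2l.
have h3 : (1 - L) ^+ 2 * S <= 4 * alpha ^+ 2 * L * Dl.
  have e : (1 - L) ^+ 2 * S = 2 * (1 - L) * (S - (1 + L) / 2 * S) by field.
  rewrite e.
  have h4 : S - (1 + L) / 2 * S <= L * (1 + L) / (1 - L) * alpha ^+ 2 * Dl by lra.
  have h5 : 0 <= 2 * (1 - L) by lra.
  apply: le_trans (ler_wpM2l h5 h4) _.
  have -> : 2 * (1 - L) * (L * (1 + L) / (1 - L) * alpha ^+ 2 * Dl) = 2 * (1 + L) * (L * alpha ^+ 2 * Dl).
    by field; rewrite gt_eqF.
  have -> : 4 * alpha ^+ 2 * L * Dl = 4 * (L * alpha ^+ 2 * Dl) by ring.
  apply: ler_wpM2r; first by apply: mulr_ge0 => //; apply: mulr_ge0 => //; exact: sqr_ge0.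
  lra.
rewrite mulrAC ler_pdivlMr ?exprn_gt0 // mulrC; first exact: h3.
Qed.

Section Norms.
Variables (R : realType) (n d : nat).

Lemma snorm_sq (v : 'I_n -> 'rV[R]_d) :
  snorm v ^+ 2 = \sum_i \sum_k v i 0 k ^+ 2.
Proof.
have en : forall i, enorm (v i) ^+ 2 = \sum_k v i 0 k ^+ 2.
  move=> i; rewrite /enorm /dotv sqr_sqrtr.
    by apply: eq_bigr => k _; rewrite expr2.
  by apply: sumr_ge0 => k _; rewrite -expr2 sqr_ge0.
rewrite /snorm sqr_sqrtr; first by apply: eq_bigr => i _; rewrite en.
by apply: sumr_ge0 => i _; rewrite sqr_ge0.
Qed.

Lemma avg_entry (v : 'I_n -> 'rV[R]_d) k : avg v 0 k = n%:R^-1 * \sum_j v j 0 k.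
Proof. by rewrite /avg mxE summxE. Qed.

Lemma cons_sq (v : 'I_n -> 'rV[R]_d) :
  cons_err v ^+ 2 = th R n d (fun i k => v i 0 k).
Proof.
rewrite /cons_err snorm_sq /th; apply: eq_bigr => i _; apply: eq_bigr => k _.
by rewrite !mxE summxE.
Qed.

Lemma dn_sq (a b : 'I_n -> 'rV[R]_d) :
  snorm (fun i => a i - b i) ^+ 2 = dn R n d (fun i k => a i 0 k - b i 0 k).
Proof.
rewrite snorm_sq /dn; apply: eq_bigr => i _; apply: eq_bigr => k _.
by rewrite !mxE.
Qed.
End Norms.
Theorem lemma6 (R : realType) (n d : nat) (hn : (1 <= n)%N) (hd : (1 <= d)%N)
  (d0 : measure_display) (Omega : measurableType d0) (P : probability Omega R)
  (Xi : Type)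
  (f : 'I_n -> 'rV[R]_d -> Xi -> R) (gradf : 'I_n -> 'rV[R]_d -> Xi -> 'rV[R]_d)
  (hf : forall i s x, has_gradient (fun v => f i v s) x (gradf i x s))
  (mu : R) (hmu : 0 < mu)
  (fhat : 'I_n -> 'rV[R]_d -> 'rV[R]_d -> Xi -> R)
  (hfhat_sc : forall i x' s, strongly_convex mu (fun v => fhat i v x' s))
  (hfhat_grad : forall i x' s, has_gradient (fun v => fhat i v x' s) x' (gradf i x' s))
  (h g : 'rV[R]_d -> R) (hh : convex_fun h) (hg : convex_fun g)
  (E : rel 'I_n) (W : 'M[R]_n) (hA7 : assumption_A7 E W)
  (alpha beta : R) (halpha : 0 < alpha < 1) (hbeta : 0 < beta < 1)
  (b0 : nat) (hb0 : (1 <= b0)%N)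
  (xi batch : 'I_n -> nat -> Omega -> Xi)
  (hxi1 : forall i w, xi i 1%N w = batch i 0%N w)
  (x1 : 'rV[R]_d) (hx1 : g x1 <= 0)
  (x xhat y z : nat -> Omega -> 'I_n -> 'rV[R]_d)
  (hit : DMSSCA_iterates W alpha beta b0 gradf fhat h g xi batch x1 x xhat y z)
  (hmeas_x : forall t i k, measurable_fun setT (fun w => x t w i 0 k))
  (hmeas_xhat : forall t i k, measurable_fun setT (fun w => xhat t w i 0 k))
  (T : nat) (hT : (1 < T)%N) :
  (\sum_(1 <= t < T.+1) \int[P]_w ((cons_err (x t w) ^+ 2)%:E)
   <= ((4 * alpha ^+ 2 * lambdaW W ^+ 2) / (1 - lambdaW W ^+ 2) ^+ 2)%:E
      * \sum_(1 <= t < T) \int[P]_w ((snorm (fun i => xhat t w i - x t w i) ^+ 2)%:E))%E.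
Proof.
have [/andP[l0 l1] _] := lam_facts _ _ _ _ hA7 hn.
set L := lambdaW W ^+ 2.
have L0 : 0 <= L by rewrite sqr_ge0.
have L1 : L < 1 by rewrite /L -(expr1n _ 2%N) ltrXn2r // ?nnegrE ?l0.
case: hit => hx1' [_ [_ [_ [hxs _]]]].
pose thf := fun t w => cons_err (x t w) ^+ 2.
pose def := fun t w => snorm (fun i => xhat t w i - x t w i) ^+ 2.
have th0 : forall t w, 0 <= thf t w by move=> t w; rewrite sqr_ge0.
have de0 : forall t w, 0 <= def t w by move=> t w; rewrite sqr_ge0.
set K := 4 * alpha ^+ 2 * lambdaW W ^+ 2 / (1 - lambdaW W ^+ 2) ^+ 2.
have K0 : 0 <= K.
  apply: divr_ge0; [apply: mulr_ge0; [apply: mulr_ge0 => //; exact: sqr_ge0 | exact: sqr_ge0] | exact: sqr_ge0].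
have pw : forall w, \sum_(1 <= t < T.+1) thf t w <= K * \sum_(1 <= t < T) def t w.
  move=> w; apply: (@sum_recur _ L alpha (fun t => thf t w) (fun t => def t w) T L0 L1).
  - move=> t; exact: th0.
  - move=> t; exact: de0.
  - rewrite /thf cons_sq /th big1 // => i _; apply: big1 => k _.
    rewrite hx1'.
    under eq_bigr => j _ do rewrite hx1'.
    rewrite sumr_const card_ord -[x1 0 k *+ n]mulr_natr mulrCA mulVf ?mulr1 ?subrr ?expr0n //.
    by rewrite pnatr_eq0 -lt0n.
  - move=> t ht; rewrite /thf /def !cons_sq dn_sq.
    have -> : (fun i k => x t.+1 w i 0 k) =
       (fun i k => \sum_j W i j * (x t w j 0 k + alpha * (xhat t w j 0 k - x t w j 0 k))).
      apply/funext => i; apply/funext => k; rewrite hxs // summxE.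
      by apply: eq_bigr => j _; rewrite !mxE.
    exact: (step _ _ _ _ hA7 hn).
  - exact: hT.
have mth : forall t, measurable_fun setT (thf t).
  move=> t; rewrite /thf.
  have -> : (fun w => cons_err (x t w) ^+ 2) = (fun w => th R n d (fun i k => x t w i 0 k)).
    by apply/funext => w; rewrite cons_sq.
  rewrite /th; apply: measurable_sum => i; apply: measurable_sum => k.
  apply: measurable_realfun.measurable_funX; apply: measurable_realfun.measurable_funB => //.
  apply: measurable_realfun.measurable_funM => //; apply: measurable_sum => j //.
have mde : forall t, measurable_fun setT (def t).
  move=> t; rewrite /def.
  have -> : (fun w => snorm (fun i => xhat t w i - x t w i) ^+ 2) =
     (fun w => dn R n d (fun i k => xhat t w i 0 k - x t w i 0 k)).
    by apply/funext => w; rewrite dn_sq.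
  rewrite /dn; apply: measurable_sum => i; apply: measurable_sum => k.
  by apply: measurable_realfun.measurable_funX; apply: measurable_realfun.measurable_funB.
have mthE : forall t, measurable_fun [set: Omega] (EFin \o thf t).
  by move=> t; apply/measurable_EFinP; exact: mth.
have mdeE : forall t, measurable_fun [set: Omega] (EFin \o def t).
  by move=> t; apply/measurable_EFinP; exact: mde.
have e1 := @ge0_integral_sum _ _ _ P setT measurableT nat (fun t w => (thf t w)%:E)
   mthE (fun t w _ => th0 t w)
   (index_iota 1 T.+1).
have e2 := @ge0_integral_sum _ _ _ P setT measurableT nat (fun t w => (def t w)%:E)
   mdeE (fun t w _ => de0 t w)
   (index_iota 1 T).
change (\sum_(1 <= t < T.+1) \int[P]_w (thf t w)%:E <=
        K%:E * \sum_(1 <= t < T) \int[P]_w (def t w)%:E)%E.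
rewrite -e1 -e2.
have f10 : forall w, [set: Omega] w -> (0 <= \sum_(1 <= t < T) (def t w)%:E)%E.
  by move=> w _; rewrite sumEFin lee_fin; apply: sumr_ge0 => t _; exact: de0.
have mf1 : measurable_fun [set: Omega] (fun w => \sum_(1 <= t < T) (def t w)%:E)%E.
  by apply: emeasurable_sum => t; exact: mdeE.
rewrite -(ge0_integralZl_EFin _ _ f10 mf1 K0).
apply: ge0_le_integral => //.
- by move=> w _; rewrite sumEFin lee_fin; apply: sumr_ge0 => t _; exact: th0.
- by apply: emeasurable_sum => t; exact: mthE.
- exact: measurable_funeM mf1.
- by move=> w _; rewrite !sumEFin -EFinM lee_fin; exact: pw.
- exact: measurableT.
Qed.
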